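(* Let $G$ be a real $n\times m$ matrix and $\mathbf v\in\mathbb R^n$, and let $\mathcal G=\{x\in\mathbb R^m: Gx\le \mathbf v\}$ (componentwise). Let $P$ be the nonnegative orthant of $\mathbb R^n$ and $F=\mathcal R(G)$. Write $\mathbf v=\mathbf v_F+\upsilon$, where $\mathbf v_F$ is the orthogonal projection of $\mathbf v$ onto $F$ and $\upsilon$ is the orthogonal projection of $\mathbf v$ onto $F^\perp$. Assume $\upsilon\neq 0$ and $F\cap P=\{0\}$. Let $F_e=\mathrm{span}(\upsilon)+F$. Every $y\in F_e$ can be written uniquely as $y=\beta(y)\upsilon+z$ with $\beta(y)\in\mathbb R$ and $z\in F$. Then the following hold. 1. If $F_e\cap P\neq\{0\}$, then the sign of $\beta(y)$ is the same for all nonzero $y\in F_e\cap P$, and this sign is nonzero. 2. $\mathcal G\neq\emptyset$ if and only if $F_e\cap P\neq\{0\}$ and $\beta(y)>0$ for the nonzero $y\in F_e\cap P$.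
   Context: Uniqueness of the decomposition holds because $\upsilon\perp F$ and $\upsilon\ne0$. *)

(* Defs.v *)
From HB Require Import structures.
From mathcomp Require Import all_boot all_order all_algebra.
From mathcomp Require Import reals.
Set Implicit Arguments. Unset Strict Implicit. Unset Printing Implicit Defensive.
Import Order.TTheory GRing.Theory Num.Theory.
Local Open Scope ring_scope.

Section Defs.
Variable R : realType.

Definition dotv n (u w : 'cV[R]_n) : R := \sum_(i < n) u i 0 * w i 0.

Definition in_orthant n (y : 'cV[R]_n) : Prop := forall i, 0 <= y i 0.

Definition in_range n m (G : 'M[R]_(n, m)) (y : 'cV[R]_n) : Prop :=
  exists x : 'cV[R]_m, y = G *m x.

Definition orth_range n m (G : 'M[R]_(n, m)) (u : 'cV[R]_n) : Prop :=
  forall z, in_range G z -> dotv u z = 0.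

Definition in_Fe n m (G : 'M[R]_(n, m)) (ups y : 'cV[R]_n) : Prop :=
  exists b : R, exists z, in_range G z /\ y = b *: ups + z.

(* b = beta(y): y = b ups + z with z in F (unique since ups in F^perp, ups <> 0) *)
Definition is_beta n m (G : 'M[R]_(n, m)) (ups y : 'cV[R]_n) (b : R) : Prop :=
  exists z, in_range G z /\ y = b *: ups + z.

Definition in_poly n m (G : 'M[R]_(n, m)) (v : 'cV[R]_n) (x : 'cV[R]_m) : Prop :=
  forall i, (G *m x) i 0 <= v i 0.

End Defs.

(* Main.v *)
Require Import Defs.
From HB Require Import structures.
From mathcomp Require Import all_boot all_order all_algebra.
From mathcomp Require Import reals.
From mathcomp Require Import ring lra.
Import Order.TTheory GRing.Theory Num.Theory.
Local Open Scope ring_scope.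

Lemma range_comb (R : realType) n m (G : 'M[R]_(n, m)) a b z1 z2 :
  in_range G z1 -> in_range G z2 -> in_range G (a *: z1 + b *: z2).
Proof.
move=> [x1 ->] [x2 ->]; exists (a *: x1 + b *: x2).
by rewrite mulmxDr !scalemxAr.
Qed.
Arguments range_comb {R n m G}.

Lemma opp_sign (R : realType) n m (G : 'M[R]_(n, m)) (ups y1 y2 z1 z2 : 'cV[R]_n) b1 b2 :
  (forall y, in_range G y -> in_orthant y -> y = 0) ->
  in_range G z1 -> in_range G z2 -> y1 = b1 *: ups + z1 -> y2 = b2 *: ups + z2 ->
  in_orthant y1 -> in_orthant y2 -> y1 != 0 -> 0 < b1 -> b2 < 0 -> False.
Proof.
move=> FP r1 r2 e1 e2 o1 o2 nz p1 n2.
have hw : (- b2) *: y1 + b1 *: y2 = (- b2) *: z1 + b1 *: z2.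
  rewrite e1 e2 !scalerDr !scalerA.
  rewrite [b1 * b2]mulrC mulNr scaleNr.
  by rewrite addrACA addNr add0r.
have w0 : (- b2) *: y1 + b1 *: y2 = 0.
  apply: FP; first by rewrite hw; apply: range_comb.
  move=> i; rewrite !mxE; apply: addr_ge0; apply: mulr_ge0 => //; lra.
move/negP: nz; apply; apply/eqP/matrixP => i j; rewrite ord1 [RHS]mxE.
have := congr1 (fun M : 'cV[R]_n => M i 0) w0; rewrite /= !mxE => h.
have := o1 i; have := o2 i; nra.
Qed.
Arguments opp_sign {R n m G ups y1 y2 z1 z2 b1 b2}.

Lemma beta_nz (R : realType) n m (G : 'M[R]_(n, m)) (ups y z : 'cV[R]_n) b :
  (forall y, in_range G y -> in_orthant y -> y = 0) ->
  in_range G z -> y = b *: ups + z -> in_orthant y -> y != 0 -> b != 0.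
Proof.
move=> FP r e o nz; apply/negP => /eqP b0; move/negP: nz; apply; apply/eqP.
by apply: FP => //; rewrite e b0 scale0r add0r.
Qed.
Arguments beta_nz {R n m G ups y z b}.

Lemma same_sign (R : realType) n m (G : 'M[R]_(n, m)) (ups y1 y2 z1 z2 : 'cV[R]_n) b1 b2 :
  (forall y, in_range G y -> in_orthant y -> y = 0) ->
  in_range G z1 -> in_range G z2 -> y1 = b1 *: ups + z1 -> y2 = b2 *: ups + z2 ->
  in_orthant y1 -> in_orthant y2 -> y1 != 0 -> y2 != 0 -> Num.sg b1 = Num.sg b2.
Proof.
move=> FP r1 r2 e1 e2 o1 o2 nz1 nz2.
have h1 := beta_nz FP r1 e1 o1 nz1; have h2 := beta_nz FP r2 e2 o2 nz2.
case: (ltrgtP b1 0) h1 => // c1 _; case: (ltrgtP b2 0) h2 => // c2 _.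
- by rewrite !ltr0_sg.
- by case: (opp_sign FP r2 r1 e2 e1 o2 o1 nz2 c2 c1).
- by case: (opp_sign FP r1 r2 e1 e2 o1 o2 nz1 c1 c2).
- by rewrite !gtr0_sg.
Qed.
Arguments same_sign {R n m G ups y1 y2 z1 z2 b1 b2}.

Lemma dotv_self_gt0 (R : realType) n (u : 'cV[R]_n) : u != 0 -> 0 < dotv u u.
Proof.
move=> nz; rewrite lt_def; apply/andP; split; last first.
  by rewrite /dotv sumr_ge0 // => i _; rewrite -expr2 sqr_ge0.
apply/negP => /eqP h; move/negP: nz; apply; apply/eqP/matrixP => i j.
rewrite ord1 [RHS]mxE.
have := (psumr_eq0P (P := xpredT) (F := fun i : 'I_n => u i 0 * u i 0)).
move=> H; have /H {}H : forall i : 'I_n, true -> 0 <= u i 0 * u i 0.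
  by move=> k _; rewrite -expr2 sqr_ge0.
by have /eqP := H h i isT; rewrite mulf_eq0 orbb => /eqP.
Qed.
Arguments dotv_self_gt0 {R n u}.

Theorem mainTheorem3 (R : realType) (n m : nat) (G : 'M[R]_(n, m))
    (v vF ups : 'cV[R]_n) :
  (* v = vF + ups: orthogonal projections onto F = R(G) and onto F^perp *)
  in_range G vF -> orth_range G ups -> v = vF + ups ->
  ups != 0 ->
  (forall y, in_range G y -> in_orthant y -> y = 0) ->
  (* 1. *)
  ((exists y, in_Fe G ups y /\ in_orthant y /\ y != 0) ->
     exists s : R, s != 0 /\
       forall y b, in_Fe G ups y -> in_orthant y -> y != 0 ->
         is_beta G ups y b -> Num.sg b = s)
  /\
  (* 2. *)
  ((exists x, in_poly G v x) <->
     ((exists y, in_Fe G ups y /\ in_orthant y /\ y != 0) /\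
      forall y b, in_Fe G ups y -> in_orthant y -> y != 0 ->
         is_beta G ups y b -> 0 < b)).
Proof.
move=> rvF orth ev nz FP.
split.
  move=> [y0 [[b0 [z0 [r0 e0]]] [o0 nz0]]].
  exists (Num.sg b0); split; first by rewrite sgr_eq0 (beta_nz FP r0 e0 o0 nz0).
  move=> y b _ o nzy [z [r e]].
  exact: same_sign FP r r0 e e0 o o0 nzy nz0.
split.
- move=> [x hx].
  set w := vF - G *m x.
  set y1 := v - G *m x.
  have e1 : y1 = 1 *: ups + w by rewrite /y1 /w scale1r ev addrCA addrA.
  have r1 : in_range G w.
    by rewrite /w; case: rvF => xF ->; exists (xF - x); rewrite mulmxBr.
  have o1 : in_orthant y1 by move=> i; have := hx i; rewrite !mxE subr_ge0.
  have nz1 : y1 != 0.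
    apply/negP => /eqP y0.
    have eu : ups = - w by apply/eqP; rewrite -addr_eq0 -[ups]scale1r -e1 y0.
    have rw : in_range G (- w).
      by rewrite /w; case: rvF => xF ->; exists (x - xF); rewrite mulmxBr opprB.
    have := dotv_self_gt0 nz; rewrite {2}eu (orth _ rw) ltxx //.
  split.
    exists y1; split; last by split.
    by exists 1, w.
  move=> y b _ o nzy [z [r e]].
  have := same_sign FP r r1 e e1 o o1 nzy nz1.
  by rewrite sgr1 => /eqP; rewrite sgr_cp0.
- move=> [[y0 [[b0 [z0 [r0 e0]]] [o0 nz0]]] H].
  have bp : 0 < b0.
    apply: (H y0 b0) => //; first by exists b0, z0.
    by exists z0.
  case: rvF => xF evF; case: r0 => x0 ez0.
  exists (xF - b0^-1 *: x0).
  have eq : G *m (xF - b0^-1 *: x0) = v - b0^-1 *: y0.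
    rewrite mulmxBr -scalemxAr -evF -ez0 ev e0 scalerDr scalerA mulVf ?gt_eqF //.
    by rewrite scale1r opprD addrA addrK.
  move=> i; rewrite eq !mxE gerBl; apply: mulr_ge0; last exact: o0.
  by rewrite invr_ge0 ltW.
Qed.
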